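(* Fix a model class $\mathcal M\subseteq\mathcal M^+$, $\bar M\in\mathcal M^+$ and $\varepsilon>0$, and set $\mathcal M'=\{M\in\mathcal M:f^{\bar M}(\pi_{\bar M})\le f^M(\pi_{\bar M})+\varepsilon\}$. Then $$\mathrm{dec}^{\mathrm c}_{\mathrm r,\varepsilon/\sqrt2}(\mathcal M,\bar M)\le\mathrm{dec}^{\mathrm c}_{\mathrm r,\varepsilon}(\mathcal M',\bar M)+\varepsilon.$$
   Context: Models are kernels $M:\Pi\to\Delta([0,1]\times\mathcal O)$ (rewards in $[0,1]$); $\mathcal M^+$ is the set of all models. $f^M(\pi)=\mathbb E_{(r,o)\sim M(\pi)}[r]$, $\pi_M\in\arg\max f^M$, $g^M(\pi)=f^M(\pi_M)-f^M(\pi)$; $D^2_H$ is squared Hellinger distance. Constrained regret DEC: $\mathrm{dec}^{\mathrm c}_{\mathrm r,\varepsilon}(\mathcal N,\bar M)=\inf_{p\in\Delta(\Pi)}\sup_{M\in\mathcal N}\{\mathbb E_{\pi\sim p}[g^M(\pi)]:\mathbb E_{\pi\sim p}[D^2_H(M(\pi),\bar M(\pi))]\le\varepsilon^2\}$ (value $0$ if no $M$ satisfies the constraint). *)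

(* Defs.v *)
From HB Require Import structures.
From mathcomp Require Import all_boot all_order all_algebra.
From mathcomp Require Import all_classical all_reals.
From mathcomp Require Import ereal topology normedtype sequences measure lebesgue_measure
  lebesgue_integral probability charge measurable_realfun kernel.

Set Implicit Arguments.
Unset Strict Implicit.
Unset Printing Implicit Defensive.

Import Order.TTheory GRing.Theory Num.Theory.
Local Open Scope classical_set_scope.
Local Open Scope ring_scope.
Local Open Scope ereal_scope.
Local Open Scope charge_scope.

Section hellinger.
Context {d : measure_display} {T : measurableType d} {R : realType}.
Context (P Q : probability T R).

Definition hell_nu : set T -> \bar R := measure_add P Q.
HB.instance Definition _ := Measure.copy hell_nu (measure_add P Q).

Let domfin : fin_num_fun hell_nu.
Proof.
move=> U mU; rewrite /hell_nu measure_addE fin_numD.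
by rewrite !fin_num_measure.
Qed.

HB.instance Definition _ := @Measure_isFinite.Build _ T R hell_nu domfin.

Definition hell_dom : {finite_measure set T -> \bar R} := hell_nu.

Definition hellinger2 : R :=
  fine (\int[hell_dom]_x
    (((Num.sqrt (fine (('d (charge_of_finite_measure P) '/d hell_dom) x))
       - Num.sqrt (fine (('d (charge_of_finite_measure Q) '/d hell_dom) x))) ^+ 2)%R)%:E).

End hellinger.

Section dec.
Context {R : realType} {dP dO : measure_display}
  {Pi : measurableType dP} {O : measurableType dO}.

(** a model assigns to every decision a distribution over
    (reward, observation) pairs in R x O *)
Definition model := Pi -> probability (R * O)%type R.

(** membership in M^+ : a (measurable) kernel whose rewards lie in [0,1] *)
Definition is_model (M : model) : Prop :=
  (forall pi, M pi [set x | (0 <= x.1 <= 1)%R] = 1) /\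
  (forall A, measurable A -> measurable_fun [set: Pi] (fun pi => M pi A)).

Definition fM (M : model) (pi : Pi) : R :=
  fine (\int[M pi]_x (x.1)%:E).

Definition is_argmax (M : model) (pi : Pi) : Prop :=
  forall pi', (fM M pi' <= fM M pi)%R.

(** g^M(pi), where piM M plays the role of pi_M *)
Definition gM (piM : model -> Pi) (M : model) (pi : Pi) : R :=
  (fM M (piM M) - fM M pi)%R.

(** constrained regret DEC; the sup over an empty feasible set is 0 *)
Definition dec_c (piM : model -> Pi) (eps : R) (N : set model) (Mbar : model)
    : \bar R :=
  ereal_inf [set
    ereal_sup (0 |` [set \int[p]_pi (gM piM M pi)%:E | M in
        [set M | N M /\
           \int[p]_pi (hellinger2 (M pi) (Mbar pi))%:E <= ((eps ^+ 2)%R)%:E]])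
    | p in [set: probability Pi R]].

End dec.

(* Main.v *)
Require Import Defs.
From HB Require Import structures.
From mathcomp Require Import all_boot all_order all_algebra.
From mathcomp Require Import all_classical all_reals.
From mathcomp Require Import ereal topology normedtype sequences measure lebesgue_measure
  lebesgue_integral probability charge measurable_realfun kernel.
From mathcomp Require Import realfun ring lra.
Import Order.TTheory GRing.Theory Num.Theory.
Local Open Scope classical_set_scope.
Local Open Scope ring_scope.
Local Open Scope charge_scope.

Lemma measurable_sqrt_comp {d} {T : measurableType d} {R : realType} (f : T -> R) :
  measurable_fun setT f -> measurable_fun setT (fun x => Num.sqrt (f x)).
Proof.
move=> mf; apply: (measurableT_comp _ mf).
exact: continuous_measurable_fun (@sqrt_continuous R).
Qed.

Lemma ptwise (R : realType) (s phi p q t : R) : -1 <= s <= 1 -> 0 <= phi <= 1 ->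
  0 <= p -> 0 <= q -> 0 < t ->
  s * (phi * p - phi * q) <= (2 * t)^-1 * (Num.sqrt p - Num.sqrt q) ^+ 2
     + (t / 4 * (p + q) + s / 2 * (p - q)).
Proof.
move=> /andP[s1 s2] /andP[f1 f2] p0 q0 t0.
set a := Num.sqrt p; set b := Num.sqrt q.
have a0 : 0 <= a by apply: sqrtr_ge0.
have b0 : 0 <= b by apply: sqrtr_ge0.
have pa : p = a ^+ 2 by rewrite sqr_sqrtr.
have qb : q = b ^+ 2 by rewrite sqr_sqrtr.
rewrite pa qb.
set u := s * (phi - 2^-1).
have u2 : u ^+ 2 <= 4^-1.
  rewrite /u exprMn.
  have hs : s ^+ 2 <= 1 by nra.
  have hw : (phi - 2^-1) ^+ 2 <= 4^-1 by nra.
  have := ler_pM (sqr_ge0 s) (sqr_ge0 (phi - 2^-1)) hs hw.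
  by rewrite mul1r.
have key : 0 <= 2 * ((a - b) - t * u * (a + b)) ^+ 2 + t ^+ 2 * (a + b) ^+ 2 * (2^-1 - 2 * u ^+ 2)
   + t ^+ 2 * (a - b) ^+ 2 / 2.
  have : 0 <= 2^-1 - 2 * u ^+ 2 by lra.
  move=> h; apply: addr_ge0; first apply: addr_ge0.
  - by rewrite mulr_ge0 // sqr_ge0.
  - by apply: mulr_ge0 => //; apply: mulr_ge0; exact: sqr_ge0.
  - by apply: divr_ge0 => //; apply: mulr_ge0; exact: sqr_ge0.
have E : (2 * t)^-1 * (a - b) ^+ 2 + (t / 4 * (a ^+ 2 + b ^+ 2) + s / 2 * (a ^+ 2 - b ^+ 2))
   - s * (phi * a ^+ 2 - phi * b ^+ 2) =
   (4 * t)^-1 * (2 * ((a - b) - t * u * (a + b)) ^+ 2 + t ^+ 2 * (a + b) ^+ 2 * (2^-1 - 2 * u ^+ 2)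
   + t ^+ 2 * (a - b) ^+ 2 / 2).
  rewrite /u; field; lra.
rewrite -subr_ge0 E; apply: mulr_ge0 => //; rewrite invr_ge0; lra.
Qed.

Lemma mEFin {d} {T : measurableType d} {R : realType} (f : T -> R) :
  measurable_fun setT f -> measurable_fun setT (fun x => (f x)%:E).
Proof. by move=> mf; apply: measurableT_comp => //; exact: EFin_measurable. Qed.

Section absint.
Context {d : measure_display} {T : measurableType d} {R : realType}.
Variables (mu : {finite_measure set T -> \bar R}) (p q : T -> R).
Hypotheses (mp : measurable_fun setT p) (mq : measurable_fun setT q).
Hypotheses (p0 : forall x, 0 <= p x) (q0 : forall x, 0 <= q x).
Hypotheses (ip : mu.-integrable setT (EFin \o p)) (iq : mu.-integrable setT (EFin \o q)).

Lemma intdom (f : T -> R) (C : R) : measurable_fun setT f ->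
  (forall x, `|f x| <= C * (p x + q x)) -> mu.-integrable setT (EFin \o f).
Proof.
move=> mf fC.
have ig : mu.-integrable setT (EFin \o (fun x => C * (p x + q x))).
  have := integrableZl measurableT C (integrableD measurableT ip iq).
  by apply: eq_integrable => // x _ /=; rewrite EFinM EFinD.
apply: (le_integrable measurableT _ _ ig).
  exact/measurable_EFinP.
move=> x _ /=; rewrite lee_fin.
by apply: (le_trans (fC x)); apply: ler_norm.
Qed.

Lemma intD' (f g : T -> R) : mu.-integrable setT (EFin \o f) ->
  mu.-integrable setT (EFin \o g) -> mu.-integrable setT (EFin \o (fun x => f x + g x)).
Proof.
move=> hf hg; have := integrableD measurableT hf hg.
by apply: eq_integrable => // x _ /=; rewrite EFinD.
Qed.
Lemma intB' (f g : T -> R) : mu.-integrable setT (EFin \o f) ->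
  mu.-integrable setT (EFin \o g) -> mu.-integrable setT (EFin \o (fun x => f x - g x)).
Proof.
move=> hf hg; have := integrableB measurableT hf hg.
by apply: eq_integrable => // x _ /=; rewrite EFinB.
Qed.
Lemma intZ' (c : R) (f : T -> R) : mu.-integrable setT (EFin \o f) ->
  mu.-integrable setT (EFin \o (fun x => c * f x)).
Proof.
move=> hf; have := integrableZl measurableT c hf.
by apply: eq_integrable => // x _ /=; rewrite EFinM.
Qed.

Hypotheses (Rp : \int[mu]_x p x = 1) (Rq : \int[mu]_x q x = 1).

Lemma hell_abs (phi : T -> R) (s t : R) : measurable_fun setT phi ->
  (forall x, 0 <= phi x <= 1) -> -1 <= s <= 1 -> 0 < t ->
  s * (\int[mu]_x (phi x * p x) - \int[mu]_x (phi x * q x)) <=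
  (2 * t)^-1 * \int[mu]_x ((Num.sqrt (p x) - Num.sqrt (q x)) ^+ 2) + t / 2.
Proof.
move=> mphi phi01 s1 t0.
have bphi x : `|phi x| <= 1.
  by have /andP[h1 h2] := phi01 x; rewrite ger0_norm.
have ipp : mu.-integrable setT (EFin \o (fun x => phi x * p x)).
  apply: (@intdom _ 1); first exact: measurable_funM.
  move=> x; rewrite normrM mul1r (ger0_norm (p0 x)).
  have := bphi x; have := p0 x; have := q0 x; nra.
have iqq : mu.-integrable setT (EFin \o (fun x => phi x * q x)).
  apply: (@intdom _ 1); first exact: measurable_funM.
  move=> x; rewrite normrM mul1r (ger0_norm (q0 x)).
  have := bphi x; have := p0 x; have := q0 x; nra.
have msq : measurable_fun setT (fun x => (Num.sqrt (p x) - Num.sqrt (q x)) ^+ 2).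
  apply: measurable_funX; apply: measurable_funB; exact: measurable_sqrt_comp.
have ih : mu.-integrable setT (EFin \o (fun x => (Num.sqrt (p x) - Num.sqrt (q x)) ^+ 2)).
  apply: (@intdom _ 1) => // x.
  rewrite mul1r ger0_norm ?sqr_ge0 //.
  have a0 := sqrtr_ge0 (p x); have b0 := sqrtr_ge0 (q x).
  rewrite -{2}(sqr_sqrtr (p0 x)) -{2}(sqr_sqrtr (q0 x)); nra.
rewrite -RintegralB // -RintegralZl //; last exact: intB'.
have iw : mu.-integrable setT (EFin \o (fun x => (2 * t)^-1 * (Num.sqrt (p x) - Num.sqrt (q x)) ^+ 2
     + (t / 4 * (p x + q x) + s / 2 * (p x - q x)))).
  apply: intD'; first exact: intZ'.
  by apply: intD'; apply: intZ'; [apply: intD'|apply: intB'].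
rewrite (@le_trans _ _ (\int[mu]_x ((2 * t)^-1 * (Num.sqrt (p x) - Num.sqrt (q x)) ^+ 2
     + (t / 4 * (p x + q x) + s / 2 * (p x - q x))))) //.
  apply: le_Rintegral => //.
  - by apply: intZ'; apply: intB'.
  - move=> x _; apply: ptwise => //.
rewrite RintegralD //; last first.
  by apply: intD'; apply: intZ'; [apply: intD'|apply: intB'].
  exact: intZ'.
rewrite RintegralD //; try by apply: intZ'; [apply: intD'|apply: intB'].
rewrite !RintegralZl //; try by [apply: intD'|apply: intB'].
rewrite RintegralD // RintegralB // Rp Rq.
  by rewrite lerD2l; lra.
by apply: intZ'; apply: intD'.
by apply: intZ'; apply: intB'.
Qed.

End absint.

Section dens.
Context {d : measure_display} {T : measurableType d} {R : realType}.
Variables (nu : {finite_measure set T -> \bar R}) (P : {finite_measure set T -> \bar R}).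
Hypothesis Pnu : P `<< nu.
Local Notation F := (Radon_Nikodym_SigmaFinite.f P nu).
Definition dens x := fine (F x).

Lemma densE x : F x = (dens x)%:E.
Proof. by rewrite /dens fineK // Radon_Nikodym_SigmaFinite.f_fin_num. Qed.

Lemma dens_ge0 x : 0 <= dens x.
Proof. by rewrite -lee_fin -densE Radon_Nikodym_SigmaFinite.f_ge0. Qed.

Lemma dens_int : nu.-integrable setT (EFin \o dens).
Proof.
have := Radon_Nikodym_SigmaFinite.f_integrable Pnu.
by apply: eq_integrable => // x _ /=; rewrite -densE.
Qed.

Lemma dens_meas : measurable_fun setT dens.
Proof.
have /measurable_int := dens_int.
by move/measurable_EFinP; apply.
Qed.

Lemma dens_total : (\int[nu]_x (dens x)%:E = P setT)%E.
Proof.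
rewrite (Radon_Nikodym_SigmaFinite.f_integral Pnu) //.
by apply: eq_integral => x _; rewrite -densE.
Qed.

Lemma dens_change (phi : T -> R) : measurable_fun setT phi ->
  (forall x, 0 <= phi x) ->
  (\int[P]_x (phi x)%:E = \int[nu]_x (phi x * dens x)%:E)%E.
Proof.
move=> mphi phi0.
rewrite -(Radon_Nikodym_SigmaFinite.change_of_variables Pnu).
- by apply: eq_integral => x _; rewrite densE.
- by move=> x; rewrite lee_fin.
- exact: measurableT.
- exact/measurable_EFinP.
Qed.

Lemma dens_ae : ae_eq nu setT (fun x => fine ('d (charge_of_finite_measure P) '/d nu x)) dens.
Proof.
have := ae_eq_Radon_Nikodym_SigmaFinite Pnu measurableT.
apply: filterS => x H /H <-; by [].
Qed.
End dens.

Section hellP.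
Context {d : measure_display} {T : measurableType d} {R : realType}.
Variables (P Q : probability T R).
Local Notation nu := (hell_dom P Q).

Lemma domP : P `<< nu.
Proof.
move=> N nN A mA AN; have := nN A mA AN.
rewrite /hell_dom /= /hell_nu measure_addE => /eqP.
by rewrite padde_eq0 ?measure_ge0 // => /andP[/eqP -> _].
Qed.
Lemma domQ : Q `<< nu.
Proof.
move=> N nN A mA AN; have := nN A mA AN.
rewrite /hell_dom /= /hell_nu measure_addE => /eqP.
by rewrite padde_eq0 ?measure_ge0 // => /andP[_ /eqP ->].
Qed.

Local Notation p := (dens nu P).
Local Notation q := (dens nu Q).

Lemma hellE : hellinger2 P Q = \int[nu]_x ((Num.sqrt (p x) - Num.sqrt (q x)) ^+ 2).
Proof.
rewrite /hellinger2 /Rintegral; congr fine.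
apply: ae_eq_integral => //.
- apply: mEFin; apply: measurable_funX; apply: measurable_funB;
    apply: measurable_sqrt_comp; apply: measurableT_comp;
    try exact: fine_measurable; apply: measurable_int; apply: Radon_Nikodym_integrable;
    [exact: domP|exact: domQ].
- apply: mEFin; apply: measurable_funX; apply: measurable_funB;
    apply: measurable_sqrt_comp; [exact: (dens_meas _ _ domP)|exact: (dens_meas _ _ domQ)].
- have h1 := dens_ae _ _ domP; have h2 := dens_ae _ _ domQ.
  apply: filterS2 h1 h2 => x e1 e2 _; by rewrite (e1 I) (e2 I).
Qed.

Lemma Rint_dens (A : probability T R) (An : A `<< nu) : \int[nu]_x (dens nu A x) = 1.
Proof. by rewrite /Rintegral (dens_total _ _ An) [X in fine X](_ : _ = 1%E) //; exact: probability_setT. Qed.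

Lemma hell_bound (phi : T -> R) (s t : R) : measurable_fun setT phi ->
  (forall x, 0 <= phi x <= 1) -> -1 <= s <= 1 -> 0 < t ->
  s * (fine (\int[P]_x (phi x)%:E) - fine (\int[Q]_x (phi x)%:E)) <=
  (2 * t)^-1 * hellinger2 P Q + t / 2.
Proof.
move=> mphi phi01 s1 t0.
have phi0 x : 0 <= phi x by case/andP: (phi01 x).
rewrite hellE (dens_change _ _ domP) // (dens_change _ _ domQ) //.
apply: hell_abs => //.
- exact: (dens_meas _ _ domP).
- exact: (dens_meas _ _ domQ).
- exact: (dens_ge0 _ _ domP).
- exact: (dens_ge0 _ _ domQ).
- exact: (dens_int _ _ domP).
- exact: (dens_int _ _ domQ).
- exact: Rint_dens domP.
- exact: Rint_dens domQ.
Qed.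

End hellP.

Section models.
Context {R : realType} {dP dO : measure_display}
  {Pi : measurableType dP} {O : measurableType dO}.

Definition clip (x : (R * O)%type) : R := Num.min (Num.max x.1 0) 1.

Lemma clip_meas : measurable_fun setT clip.
Proof.
rewrite /clip.
apply: (measurable_minr (f := fun x : (R * O)%type => Num.max x.1 0) (g := cst 1)).
  apply: (measurable_maxr (f := fst) (g := cst 0)).
    exact: measurable_fst.
  exact: measurable_cst.
exact: measurable_cst.
Qed.

Lemma clip01 x : 0 <= clip x <= 1.
Proof.
rewrite /clip; apply/andP; split.
  by rewrite le_min ler01 le_max lexx orbT.
by rewrite ge_min lexx orbT.
Qed.

Definition S01 := [set x : (R * O)%type | 0 <= x.1 <= 1].

Lemma S01_meas : measurable S01.
Proof.
have := measurable_fst measurableT _ (measurable_itv `[(0:R), 1]).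
move=> /(_ _ O); rewrite setTI; congr measurable; apply/seteqP; split => x /=;
  by rewrite /S01 /= in_itv.
Qed.

Lemma fM_clip (M : @model R dP dO Pi O) pi : is_model M ->
  fM M pi = fine (\int[M pi]_x (clip x)%:E).
Proof.
move=> [h1 h2]; rewrite /fM; congr fine.
apply: ae_eq_integral => //.
- apply: mEFin; exact: measurable_fst.
- apply: mEFin; exact: clip_meas.
- exists (~` S01); split.
  + exact: measurableC S01_meas.
  + by move: (probability_setC (M pi) S01_meas); rewrite /S01 h1 subee.

  + move=> x /= hx hS; apply: hx => _.
    move: hS; rewrite /S01 /= => /andP[a b].
    by rewrite /clip (max_l a) (min_l b).
Qed.

Lemma fM01 (M : @model R dP dO Pi O) pi : is_model M -> 0 <= fM M pi <= 1.
Proof.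
move=> hM; rewrite fM_clip //.
have i0 : (0 <= \int[M pi]_x (clip x)%:E)%E.
  by apply: integral_ge0 => x _; rewrite lee_fin; case/andP: (clip01 x).
have i1 : (\int[M pi]_x (clip x)%:E <= 1)%E.
  have h : (\int[M pi]_x (clip x)%:E <= integral (M pi) setT (cst 1%:E))%E.
    apply: ge0_le_integral => //.
    - by move=> x _; rewrite lee_fin; case/andP: (clip01 x).
    - exact: mEFin clip_meas.
    - by move=> x _; rewrite lee_fin; case/andP: (clip01 x).
  move: h; rewrite integral_cst // [X in (_ * X)%E](_ : _ = 1%E) ?mule1 //; exact: probability_setT.
have Xfin : (\int[M pi]_x (clip x)%:E)%E \is a fin_num.
  by rewrite ge0_fin_numE // (le_lt_trans i1) // ltry.
by rewrite -!lee_fin fineK // i0 i1.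
Qed.

Lemma fM_meas (M : @model R dP dO Pi O) : is_model M -> measurable_fun setT (fM M).
Proof.
move=> hM.
rewrite (_ : fM M = fun pi => fine (\int[M pi]_x (clip x)%:E)); last first.
  by apply/funext => pi; rewrite fM_clip.
apply: measurableT_comp; first exact: fine_measurable.
apply: (measurable_fun_integral_kernel (l := fun pi => (M pi : measure _ R))).
- by case: hM.
- by move=> x; rewrite lee_fin; case/andP: (clip01 x).
- exact: mEFin clip_meas.
Qed.

Lemma hell_ge0 (P Q : probability (R * O)%type R) : 0 <= hellinger2 P Q.
Proof.
rewrite /hellinger2 fine_ge0 // integral_ge0 // => x _.
by rewrite lee_fin sqr_ge0.
Qed.

Lemma hell_model (M Mb : @model R dP dO Pi O) pi (s t : R) : is_model M -> is_model Mb ->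
  -1 <= s <= 1 -> 0 < t ->
  s * (fM M pi - fM Mb pi) <= (2 * t)^-1 * hellinger2 (M pi) (Mb pi) + t / 2.
Proof.
move=> hM hMb s1 t0; rewrite (fM_clip _ _ hM) (fM_clip _ _ hMb).
apply: hell_bound => //; first exact: clip_meas.
exact: clip01.
Qed.

End models.

Lemma le_int_any {d} {T : measurableType d} {R : realType} (mu : measure T R)
  (f g : T -> \bar R) : (forall x, 0 <= f x)%E -> (forall x, f x <= g x)%E ->
  (\int[mu]_x f x <= \int[mu]_x g x)%E.
Proof.
move=> f0 fg; have g0 x : (0 <= g x)%E by exact: le_trans (f0 x) (fg x).
rewrite (ge0_integralTE mu f0) (ge0_integralTE mu g0) /=.
apply: ereal_sup_le => _ [h hf <-]; exists h => //= x.
exact: le_trans (hf x) (fg x).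
Qed.

Section mix.
Import HBNNSimple.
Context {d : measure_display} {T : measurableType d} {R : realType}.
Variables (p : probability T R) (a : T).
Definition hh : {nonneg R} := (2^-1)%:nng.
Definition mixm := measure_add (mscale hh p) (mscale hh \d_a).
HB.instance Definition _ := Measure.copy mixm (measure_add (mscale hh p) (mscale hh \d_a)).
Lemma mixm_setT : (mixm setT = 1)%E.
Proof.
rewrite /mixm measure_addE.
have E1 : (mscale hh p setT = (2^-1)%:E * p setT)%E by [].
have E2 : (mscale hh \d_a setT = (2^-1)%:E * \d_a setT)%E by [].
have P1 : (p setT = 1)%E by exact: probability_setT.
apply: (@eq_trans _ _ ((2^-1)%:E * p setT + (2^-1)%:E * \d_a setT)%E); first by [].
rewrite P1 diracE in_setT mule1.
by rewrite -EFinD; congr (_%:E); field.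
Qed.
HB.instance Definition _ := Measure_isProbability.Build _ _ _ mixm mixm_setT.
Definition mix : probability T R := mixm.

Lemma mix_int (f : T -> \bar R) : measurable_fun setT f -> (forall x, 0 <= f x)%E ->
  (\int[mix]_x f x = (2^-1)%:E * \int[p]_x f x + (2^-1)%:E * f a)%E.
Proof.
move=> mf f0.
rewrite /mix /= /mixm ge0_integral_measure_add //.
rewrite !ge0_integral_mscale // integral_dirac // diracE in_setT mul1e.
by [].
Qed.

Lemma mix_lower (g : T -> \bar R) : (forall x, 0 <= g x)%E ->
  (\int[p]_x g x <= 2%:E * \int[mix]_x g x)%E.
Proof.
move=> g0; rewrite [X in (X <= _)%E](ge0_integralTE p g0) /=.
apply: ub_ereal_sup => _ [h hg <-].
have h0 x : (0 <= (h x)%:E)%E by rewrite lee_fin.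
have mh : measurable_fun setT (fun x => (h x)%:E).
  by apply: measurableT_comp => //; exact: EFin_measurable.
have -> : sintegral p h = (\int[p]_x (h x)%:E)%E by rewrite integral_nnsfun // patch_setT.
apply: (@le_trans _ _ (2%:E * \int[mix]_x (h x)%:E)%E); last first.
  by rewrite lee_pmul2l ?lte_fin // le_int_any.
rewrite mix_int // muleDr //.
  rewrite muleA -EFinM mulfV // mul1e leeDl // mule_ge0 // mule_ge0 //.
by apply: ge0_adde_def; rewrite inE; apply: mule_ge0 => //; apply: integral_ge0.
Qed.
End mix.

Lemma int_bdd {d} {T : measurableType d} {R : realType} (mu : probability T R) (f : T -> R) (K : R) :
  measurable_fun setT f -> (forall x, `|f x| <= K) -> mu.-integrable setT (EFin \o f).
Proof.
move=> mf fK.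
apply: (le_integrable measurableT _ _ (finite_measure_integrable_cst mu K measurableT)).
  exact: mEFin.
move=> x _ /=; rewrite lee_fin; apply: (le_trans (fK x)); exact: ler_norm.
Qed.

Lemma inf_shift {R : realType} {X : Type} (A : set X) (f : X -> \bar R) (x : \bar R) (e : R) :
  (forall y, A y -> (0 <= f y)%E) -> (forall y, A y -> (x <= f y + e%:E)%E) ->
  (x <= ereal_inf (f @` A) + e%:E)%E.
Proof.
move=> f0 H.
have I0 : (0 <= ereal_inf (f @` A))%E.
  by apply: le_ereal_inf_tmp => _ [y Ay <-]; exact: f0.
move: I0; case E : (ereal_inf (f @` A)) => [r| |] I0 //.
- rewrite -lee_subel_addr // -E; apply: le_ereal_inf_tmp => _ [y Ay <-].
  have := H y Ay; have := f0 y Ay; case: (f y) => [s| |] // _.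
  - by rewrite lee_subel_addr.
  - by move=> _; exact: leey.
- by rewrite addye //; exact: leey.
Qed.

Section main.
Context {R : realType} {dP dO : measure_display}
  {Pi : measurableType dP} {O : measurableType dO}.
Variables (M Mbar : @model R dP dO Pi O) (piM : @model R dP dO Pi O -> Pi)
  (eps : R) (a : Pi) (p : probability Pi R).
Hypotheses (hM : is_model M) (hMb : is_model Mbar) (hargM : is_argmax M (piM M))
  (hargMb : is_argmax Mbar a) (eps0 : 0 < eps).
Hypothesis hfeas : (\int[mix p a]_pi (hellinger2 (M pi) (Mbar pi))%:E
   <= ((eps / Num.sqrt 2) ^+ 2)%:E)%E.

Local Notation D pi := (hellinger2 (M pi) (Mbar pi)).
Local Notation F := (fM M).
Local Notation Fb := (fM Mbar).

Let D0 pi : 0 <= D pi. Proof. exact: hell_ge0. Qed.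

Let bnd1 pi : F pi - Fb pi <= (2 * eps)^-1 * D pi + eps / 2.
Proof.
have := @hell_model _ _ _ _ _ M Mbar pi 1 eps hM hMb.
by rewrite mul1r; apply => //; apply/andP; split; lra.
Qed.

Let bnd2 pi : Fb pi - F pi <= (2 * eps)^-1 * D pi + eps / 2.
Proof.
have := @hell_model _ _ _ _ _ M Mbar pi (-1) eps hM hMb.
by rewrite mulN1r opprB; apply => //; apply/andP; split; lra.
Qed.

Let mF : measurable_fun setT F. Proof. exact: fM_meas. Qed.
Let mFb : measurable_fun setT Fb. Proof. exact: fM_meas. Qed.

Let half : ((eps / Num.sqrt 2) ^+ 2) = eps ^+ 2 / 2.
Proof. by rewrite expr_div_n sqr_sqrtr. Qed.

Let mD2 : (\int[mix p a]_pi (D pi)%:E <= (eps ^+ 2 / 2)%:E)%E.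
Proof. by rewrite -half. Qed.

Lemma partA : Fb a <= F a + eps.
Proof.
have [psi psiE] : {psi : Pi -> R | psi = fun x => Num.max (2 * eps * (Fb x - F x) - eps ^+ 2) 0} := exist _ _ erefl.
have mpsi : measurable_fun setT psi.
  rewrite psiE.
  apply: (measurable_maxr (f := fun x => 2 * eps * (Fb x - F x) - eps ^+ 2) (g := cst 0)).
    apply: measurable_funB => //; apply: measurable_funM => //.
    exact: measurable_funB.
  exact: measurable_cst.
have psi0 x : 0 <= psi x by rewrite psiE /= le_max lexx orbT.
have psiD x : psi x <= D x.
  rewrite psiE /= ge_max D0 andbT.
  have h := bnd2 x.
  have e : 2 * eps * ((2 * eps)^-1 * D x + eps / 2) = D x + eps ^+ 2.
    by field; rewrite lt0r_neq0.
  by rewrite lerBlDr -e ler_pM2l ?mulr_gt0.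
have h1 : (\int[mix p a]_x (psi x)%:E <= (eps ^+ 2 / 2)%:E)%E.
  apply: le_trans mD2; apply: le_int_any => x; rewrite lee_fin //.
rewrite mix_int in h1; last 2 first.
  exact: mEFin.
  by move=> x; rewrite lee_fin.
have h2 : ((2^-1 * psi a)%:E <= (eps ^+ 2 / 2)%:E)%E.
  apply: le_trans h1; rewrite EFinM leeDr //.
  by apply: mule_ge0 => //; apply: integral_ge0 => x _; rewrite lee_fin.
move: h2; rewrite lee_fin => h2.
have h3 : psi a <= eps ^+ 2 by lra.
have h4 : 2 * eps * (Fb a - F a) - eps ^+ 2 <= eps ^+ 2.
  by apply: le_trans h3; rewrite psiE /= le_max lexx.
have h5 : 2 * eps * (Fb a - F a - eps) <= 0 by lra.
move: h5; rewrite pmulr_rle0 ?mulr_gt0 //; lra.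
Qed.

Lemma partB : (\int[p]_pi (D pi)%:E <= (eps ^+ 2)%:E)%E.
Proof.
have h0 : forall x, (0 <= (fun pi => (D pi)%:E) x)%E by move=> x; rewrite lee_fin.
apply: (le_trans (mix_lower p a _ h0)).
apply: (@le_trans _ _ (2%:E * (eps ^+ 2 / 2)%:E)%E).
  by rewrite lee_pmul2l // lte_fin.
by rewrite -EFinM lee_fin; lra.
Qed.

Local Notation g := (gM piM M).

Let g01 x : 0 <= g x <= 1.
Proof.
rewrite /g /gM; have := hargM x; have := fM01 M (piM M) hM; have := fM01 M x hM.
move=> /andP[h1 h2] /andP[h3 h4] h5; apply/andP; split; lra.
Qed.

Let mg : measurable_fun setT g.
Proof. by apply: measurable_funB => //; exact: measurable_cst. Qed.

Let ig : p.-integrable setT (EFin \o g).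
Proof.
apply: (@int_bdd _ _ _ _ _ 1) => // x.
by have /andP[h1 h2] := g01 x; rewrite ger0_norm.
Qed.

Local Notation Gp := (\int[p]_x g x).

Let GpE : (\int[p]_x (g x)%:E = Gp%:E)%E.
Proof. by rewrite /Rintegral fineK //; exact: integrable_fin_num ig. Qed.

Lemma partD : g a <= Gp + 2 * eps.
Proof.
have [phi phiE] : {phi : Pi -> R | phi = fun x => Num.max (2 * eps * (g a - g x) - 3 * eps ^+ 2) 0} := exist _ _ erefl.
have mphi : measurable_fun setT phi.
  rewrite phiE.
  apply: (measurable_maxr (f := fun x => 2 * eps * (g a - g x) - 3 * eps ^+ 2) (g := cst 0)).
    apply: measurable_funB => //; apply: measurable_funM => //.
    by apply: measurable_funB => //; exact: measurable_cst.
  exact: measurable_cst.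
have phi0 x : 0 <= phi x by rewrite phiE /= le_max lexx orbT.
have phiD x : phi x <= D x.
  rewrite phiE /= ge_max D0 andbT.
  have hA := partA.
  have hB := hargMb x.
  have h := bnd1 x.
  have e1 : g a - g x = F x - F a by rewrite /g /gM; lra.
  have e : 2 * eps * ((2 * eps)^-1 * D x + eps / 2) = D x + eps ^+ 2.
    by field; rewrite lt0r_neq0.
  have h' : 2 * eps * (F x - Fb x) <= D x + eps ^+ 2.
    by rewrite -e ler_pM2l ?mulr_gt0.
  rewrite e1.
  have : F x - F a <= (F x - Fb x) + eps by lra.
  move=> h2.
  have h3 : 2 * eps * (F x - F a) <= 2 * eps * ((F x - Fb x) + eps) by rewrite ler_pM2l ?mulr_gt0.
  lra.
have iphi : p.-integrable setT (EFin \o phi).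
  apply: (@int_bdd _ _ _ _ _ (2 * eps + 3 * eps ^+ 2)) => // x.
  rewrite ger0_norm // phiE ge_max; apply/andP; split.
    have := g01 x; have := g01 a; move=> /andP[h1 h2] /andP[h3 h4].
    have : 0 <= eps ^+ 2 by exact: sqr_ge0.
    have : 2 * eps * (g a - g x) <= 2 * eps * 1 by rewrite ler_pM2l ?mulr_gt0 //; lra.
    lra.
  by apply: addr_ge0; apply: mulr_ge0 => //; [exact: ltW | exact: sqr_ge0].
have h1 : (\int[p]_x (phi x)%:E <= (eps ^+ 2)%:E)%E.
  apply: le_trans partB; apply: le_int_any => x; rewrite lee_fin //.
have h2 : \int[p]_x phi x <= eps ^+ 2.
  rewrite /Rintegral -lee_fin fineK //; exact: integrable_fin_num iphi.
have icst : p.-integrable setT (EFin \o cst (2 * eps * g a - 3 * eps ^+ 2)).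
  exact: finite_measure_integrable_cst.
have ig2 : p.-integrable setT (EFin \o (fun x => 2 * eps * g x)).
  apply: (@int_bdd _ _ _ _ _ (2 * eps)).
    by apply: measurable_funM => //; exact: measurable_cst.
  move=> x; rewrite normrM ger0_norm; last by apply: mulr_ge0 => //; exact: ltW.
  by have /andP[h3 h4] := g01 x; rewrite ger0_norm // ler_piMr //; apply: mulr_ge0 => //; exact: ltW.
have h3 : \int[p]_x (2 * eps * g a - 3 * eps ^+ 2 - 2 * eps * g x) <= \int[p]_x phi x.
  apply: le_Rintegral => //.
    rewrite (_ : (EFin \o _) = (EFin \o (fun x => cst (2 * eps * g a - 3 * eps ^+ 2) x - 2 * eps * g x))) //.
    rewrite /comp; under eq_fun do rewrite EFinB.
    exact: integrableB.
  move=> x _; rewrite phiE /= le_max; apply/orP; left; lra.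
move: h3; rewrite (RintegralB measurableT icst ig2) RintegralZl // Rintegral_cst //.
have -> : fine (p setT) = 1 by rewrite probability_setT.
rewrite mulr1 => h3.
have h3' : 2 * eps * g a - 3 * eps ^+ 2 - 2 * eps * Gp <= \int[p]_x phi x := h3.
clear h3.
move: h2 h3'; generalize (\int[p]_x phi x) (\int[p]_x g x) (g a) => A B C h2 h3.
have h5 : 2 * eps * (C - B - 2 * eps) <= 0.
  have e : 2 * eps * (C - B - 2 * eps) = (2 * eps * C - 3 * eps ^+ 2 - 2 * eps * B) - eps ^+ 2 by ring.
  by rewrite e subr_le0; exact: le_trans h3 h2.
move: h5; rewrite pmulr_rle0 ?mulr_gt0 //.
by rewrite subr_le0 lerBlDr addrC.
Qed.

Lemma partC : (\int[mix p a]_x (g x)%:E <= (\int[p]_x (g x)%:E) + eps%:E)%E.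
Proof.
rewrite mix_int; last 2 first.
  exact: mEFin.
  by move=> x; rewrite lee_fin; case/andP: (g01 x).
rewrite GpE -!EFinM -!EFinD lee_fin.
have := partD; lra.
Qed.

End main.

Theorem lemmaD2 (R : realType) (dP dO : measure_display)
  (Pi : measurableType dP) (O : measurableType dO)
  (Mclass : set (@model R dP dO Pi O)) (Mbar : @model R dP dO Pi O)
  (piM : @model R dP dO Pi O -> Pi) (eps : R) :
  (forall M, Mclass M -> is_model M) ->
  is_model Mbar ->
  (forall M, Mclass M -> is_argmax M (piM M)) ->
  is_argmax Mbar (piM Mbar) ->
  0 < eps ->
  let Mclass' := [set M | Mclass M /\ fM Mbar (piM Mbar) <= fM M (piM Mbar) + eps] in
  (dec_c piM (eps / Num.sqrt 2) Mclass Mbar <= dec_c piM eps Mclass' Mbar + eps%:E)%E.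
Proof.
move=> hMc hMb hargc hargMb eps0.
rewrite [is_true _]/=.
rewrite /dec_c.
apply: inf_shift.
  by move=> p _; apply: ereal_sup_ubound; left.
move=> p _.
set a := piM Mbar.
apply: (@le_trans _ _ (ereal_sup (0%E |` [set (\int[mix p a]_pi (gM piM M pi)%:E)%E | M in
        [set M | Mclass M /\ (\int[mix p a]_pi (hellinger2 (M pi) (Mbar pi))%:E
           <= ((eps / Num.sqrt 2) ^+ 2)%:E)%E]]))).
  by apply: ereal_inf_lbound; exists (mix p a).
apply: ub_ereal_sup => _ [-> | [M [hMcM hfeas] <-]].
  apply: adde_ge0; last by rewrite lee_fin ltW.
  by apply: ereal_sup_ubound; left.
have hM := hMc M hMcM.
have hA := partA M Mbar eps a p hM hMb eps0 hfeas.
have hB := partB M Mbar eps a p hfeas.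
have hC := partC M Mbar piM eps a p hM hMb (hargc M hMcM) hargMb eps0 hfeas.
apply: le_trans hC _; rewrite leeD2r //.
apply: ereal_sup_ubound; right; exists M => //.
Qed.
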